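(* Let $m$ be a prime with $m\ge l$ and let $L$ be an allowable $2l$-cycle chain for $\mathcal H_{m,\mathcal B,S}$. Then $n(L)=1$, so the number of distinct $2l$-cycles in the Tanner graph corresponding to $L$ equals $m$. Consequently the number of $2l$-cycles of the Tanner graph is $m$ times the number of isomorphism classes of allowable $2l$-cycle chains.
   Context: Let $m\ge1$, $\mathcal B=[B_1,\ldots,B_k]$ a list of subsets of a finite set of row-block indices, and $s_{i,j}\in\mathbb{Z}_m$ for $i\in B_j$. $\mathcal H_{m,\mathcal B,S}$ is the block matrix whose $(i,j)$ block is the $m\times m$ circulant permutation matrix with entry $(x,y)$ equal to 1 iff $x\equiv y+s_{i,j}\pmod m$ when $i\in B_j$, and zero otherwise; its Tanner graph has check nodes $c(i,x)$, variable nodes $u(j,y)$, with $c(i,x)\sim u(j,y)$ iff $i\in B_j$ and $x\equiv y+s_{i,j}$. A $2l$-cycle chain ($l\ge2$) is $L=(i_0,j_0,\ldots,i_{l-1},j_{l-1})$, indices mod $l$, with $i_t,i_{t+1}\in B_{j_t}$, $i_t\ne i_{t+1}$, $j_t\ne j_{t+1}$, and $\sum_{t=0}^{l-1}(s_{i_t,j_t}-s_{i_{t+1},j_t})\equiv0\pmod m$. For $r\in\mathbb{Z}_m$: $x_0=r$, $y_t=x_t-s_{i_t,j_t}$, $x_{t+1}=y_t+s_{i_{t+1},j_t}$ (mod $m$), giving the closed walk $W_r=c(i_0,x_0),u(j_0,y_0),c(i_1,x_1),\ldots,u(j_{l-1},y_{l-1}),c(i_0,x_0)$; $L$ is allowable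 if for every $r$ the $2l$ vertices are pairwise distinct, and a $2l$-cycle of the Tanner graph corresponds to $L$ if it is the cycle traced by some $W_r$. Let $e$ be the smallest integer in $\{1,\ldots,l\}$ with $(i_{t+e},j_{t+e})=(i_t,j_t)$ for all $t$; $n(L)=l/e$. Two $2l$-cycle chains are isomorphic if one is obtained from the other by a cyclic shift by an even number of positions, possibly combined with reversal of the traversal direction (i.e. they describe the same cyclic sequence of blocks read from a different starting row-block or in the opposite direction). *)

(* Defs.v *)
From HB Require Import structures.
From mathcomp Require Import all_boot all_order all_algebra.
Set Implicit Arguments. Unset Strict Implicit. Unset Printing Implicit Defensive.
Import GRing.Theory.
Local Open Scope ring_scope.

Definition cidx (l : nat) (hl : (0 < l)%N) (t : nat) : 'I_l :=
  Ordinal (ltn_pmod t hl).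

Section Tanner.
(* I : row-block indices; columns 'I_k; B j = B_j; s i j = s_{i,j} (only
   used when i \in B j). *)
Variables (I : finType) (k m : nat) (B : 'I_k -> {set I}) (s : I -> 'I_k -> 'Z_m).

(* check node c(i,x) = (i,x); variable node u(j,y) = (j,y) *)
Definition tadj (c : I * 'Z_m) (v : 'I_k * 'Z_m) : bool :=
  (c.1 \in B v.1) && (c.2 == v.2 + s c.1 v.1).

(* E (an edge set) is a 2l-cycle of the Tanner graph: it is the edge set of a
   closed walk c_0,v_0,c_1,v_1,...,c_{l-1},v_{l-1},c_0 of 2l pairwise
   distinct vertices (checks and variables are of different types). *)
Definition tanner_cycle (l : nat) (E : {set (I * 'Z_m) * ('I_k * 'Z_m)}) : bool :=
  [exists c : {ffun 'I_l -> I * 'Z_m}, exists v : {ffun 'I_l -> 'I_k * 'Z_m},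
    [&& injectiveb c, injectiveb v,
        [forall t, tadj (c t) (v t) && tadj (c (ordS t)) (v t)] &
        E == [set (c t, v t) | t : 'I_l] :|: [set (c (ordS t), v t) | t : 'I_l]]].

Variables (l : nat) (hl : (0 < l)%N).

(* A candidate chain L = (i_0,j_0,...,i_{l-1},j_{l-1}), L t = (i_t, j_t). *)
Definition chain_t := {ffun 'I_l -> I * 'I_k}.

Definition ci (L : chain_t) (t : nat) : I := (L (cidx hl t)).1.
Definition cj (L : chain_t) (t : nat) : 'I_k := (L (cidx hl t)).2.

Definition is_chain (L : chain_t) : bool :=
  [forall t : 'I_l,
     [&& ci L t \in B (cj L t), ci L t.+1 \in B (cj L t),
         ci L t != ci L t.+1 & cj L t != cj L t.+1]]
  && (\sum_(t < l) (s (ci L t) (cj L t) - s (ci L t.+1) (cj L t)) == 0).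

(* the walk W_r: x_0 = r, y_t = x_t - s_{i_t,j_t}, x_{t+1} = y_t + s_{i_{t+1},j_t} *)
Fixpoint wx (L : chain_t) (r : 'Z_m) (t : nat) : 'Z_m :=
  match t with
  | 0 => r
  | t'.+1 => wx L r t' - s (ci L t') (cj L t') + s (ci L t) (cj L t')
  end.
Definition wy (L : chain_t) (r : 'Z_m) (t : nat) : 'Z_m :=
  wx L r t - s (ci L t) (cj L t).

Definition wcheck L r t : I * 'Z_m := (ci L t, wx L r t).
Definition wvar L r t : 'I_k * 'Z_m := (cj L t, wy L r t).

Definition allowable (L : chain_t) : bool :=
  [forall r : 'Z_m, forall t1 : 'I_l, forall t2 : 'I_l,
     [&& (wcheck L r t1 == wcheck L r t2) ==> (t1 == t2)
       & (wvar L r t1 == wvar L r t2) ==> (t1 == t2)]].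

Definition allowable_chain (L : chain_t) : bool := is_chain L && allowable L.

(* the cycle (edge set) traced by W_r; its last edge joins u(j_{l-1},y_{l-1})
   to c(i_l, x_l) = c(i_0, x_0) *)
Definition walk_edges (L : chain_t) (r : 'Z_m) : {set (I * 'Z_m) * ('I_k * 'Z_m)} :=
  [set (wcheck L r t, wvar L r t) | t : 'I_l]
  :|: [set (wcheck L r t.+1, wvar L r t) | t : 'I_l].

(* e = smallest e in {1..l} with (i_{t+e},j_{t+e}) = (i_t,j_t) for all t;
   n(L) = l / e *)
Definition periodicb (L : chain_t) (e : nat) : bool :=
  [forall t : 'I_l, L (cidx hl (t + e)) == L (cidx hl t)].
Definition chain_e (L : chain_t) : nat :=
  (find (fun e => periodicb L e.+1) (iota 0 l)).+1.
Definition chain_n (L : chain_t) : nat := l %/ chain_e L.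

(* isomorphism: cyclic shift by an even number of positions (i.e. by a
   row-block positions), possibly combined with reversal of direction *)
Definition shiftc (a : nat) (L : chain_t) : chain_t :=
  [ffun t : 'I_l => L (cidx hl (t + a))].
(* reversed traversal: i_0, j_{l-1}, i_{l-1}, j_{l-2}, ..., i_1, j_0 *)
Definition revc (L : chain_t) : chain_t :=
  [ffun t : 'I_l => ((L (cidx hl (l - t))).1, (L (cidx hl (l - t.+1))).2)].
Definition chain_iso (L1 L2 : chain_t) : bool :=
  [exists a : 'I_l, (L2 == shiftc a L1) || (L2 == shiftc a (revc L1))].

Definition allowable_chains : {set chain_t} := [set L | allowable_chain L].
Definition iso_classes : {set {set chain_t}} :=
  [set [set L' in allowable_chains | chain_iso L L'] | L in allowable_chains].

End Tanner.

(* Main.v *)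
Require Import Defs.
From mathcomp Require Import all_boot all_order all_algebra.
From mathcomp Require Import ring.
Set Implicit Arguments. Unset Strict Implicit. Unset Printing Implicit Defensive.
Import GRing.Theory.
Local Open Scope ring_scope.

Section S.
Variables (I : finType) (k m n : nat) (B : 'I_k -> {set I}) (s : I -> 'I_k -> 'Z_m).
Variable (hl : (0 < n.+2)%N).
Local Notation Z := 'I_n.+2.
Local Notation chain := (chain_t I k n.+2).

Definition cI (L : chain) (u : Z) := (L u).1.
Definition cJ (L : chain) (u : Z) := (L u).2.

Definition zn (a : nat) : Z := inZp a.

Lemma cidxE t : cidx hl t = zn t.
Proof. exact: val_inj. Qed.

Lemma ciE L t : ci hl L t = cI L (zn t).
Proof. by rewrite /ci cidxE. Qed.
Lemma cjE L t : cj hl L t = cJ L (zn t).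
Proof. by rewrite /cj cidxE. Qed.

Lemma zn_ord (u : Z) : zn u = u.
Proof. apply: val_inj => /=; exact: modn_small. Qed.

Lemma znE a : zn a = a%:R.
Proof. by rewrite /zn Zp_nat. Qed.

Lemma znD a b : zn (a + b) = zn a + zn b.
Proof. by rewrite !znE natrD. Qed.

Lemma znS a : zn a.+1 = zn a + 1.
Proof. by rewrite -[a.+1]addn1 znD. Qed.

Lemma znl : zn n.+2 = 0.
Proof. by apply: val_inj; rewrite /= modnn. Qed.

Definition delta (L : chain) (u : Z) : 'Z_m :=
  s (cI L (u + 1)) (cJ L u) - s (cI L u) (cJ L u).

Lemma wxS L r t : wx s hl L r t.+1 = wx s hl L r t + delta L (zn t).
Proof. by rewrite /= /delta !ciE !cjE znS -addrA (addrC (- _)). Qed.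

Lemma wx_sum L r t : wx s hl L r t = r + \sum_(i < t) delta L (zn i).
Proof.
elim: t => [|t IH]; first by rewrite big_ord0 addr0.
by rewrite wxS IH big_ord_recr [RHS]addrA.
Qed.

Lemma chain_sum L : is_chain B s hl L -> \sum_(u : Z) delta L u = 0.
Proof.
case/andP=> _ /eqP H.
have -> : \sum_(u : Z) delta L u = - \sum_(t < n.+2) (s (ci hl L t) (cj hl L t) - s (ci hl L t.+1) (cj hl L t)).
  rewrite -sumrN; apply: eq_bigr => t _.
  by rewrite !ciE !cjE znS zn_ord /delta opprB.
by rewrite H oppr0.
Qed.

Lemma wx_l L r : is_chain B s hl L -> wx s hl L r n.+2 = r.
Proof.
move=> HL; rewrite wx_sum.
rewrite (eq_bigr (fun i : 'I_n.+2 => delta L i)) ?chain_sum ?addr0 //.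
by move=> i _; rewrite zn_ord.
Qed.

Lemma wx_per L r a : is_chain B s hl L -> wx s hl L r (a + n.+2) = wx s hl L r a.
Proof.
move=> HL; elim: a => [|a IH]; first by rewrite add0n wx_l.
by rewrite addSn !wxS IH znD znl addr0.
Qed.

Lemma wx_mod L r a : is_chain B s hl L -> wx s hl L r a = wx s hl L r (a %% n.+2)%N.
Proof.
move=> HL; rewrite {1}(div.divn_eq a n.+2); elim: (a %/ n.+2)%N => [|q IH] //.
by rewrite mulSn -addnA addnC wx_per.
Qed.

Definition WX (L : chain) r (u : Z) := wx s hl L r u.
Definition CC (L : chain) r (u : Z) := (cI L u, WX L r u).
Definition VV (L : chain) r (u : Z) := (cJ L u, WX L r u - s (cI L u) (cJ L u)).

Lemma WX0 L r : WX L r 0 = r.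
Proof. by []. Qed.

Lemma wx_zn L r a : is_chain B s hl L -> wx s hl L r a = WX L r (zn a).
Proof. by move=> HL; rewrite (wx_mod r a HL). Qed.

Lemma WXS L r u : is_chain B s hl L -> WX L r (u + 1) = WX L r u + delta L u.
Proof.
move=> HL; rewrite -[u in u + 1]zn_ord -znS -wx_zn // wxS zn_ord //.
Qed.

Lemma WX_lin L r u : WX L r u = r + WX L 0 u.
Proof. by rewrite /WX !wx_sum add0r. Qed.

Lemma wcheckE L r (t : Z) : wcheck s hl L r t = CC L r t.
Proof. by rewrite /wcheck ciE zn_ord. Qed.
Lemma wvarE L r (t : Z) : wvar s hl L r t = VV L r t.
Proof. by rewrite /wvar /wy ciE cjE zn_ord. Qed.
Lemma wcheckS L r (t : Z) : is_chain B s hl L -> wcheck s hl L r t.+1 = CC L r (t + 1).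
Proof. by move=> HL; rewrite /wcheck ciE wx_zn // znS zn_ord. Qed.

Lemma walk_edgesE L r : is_chain B s hl L ->
  walk_edges s hl L r = [set (CC L r t, VV L r t) | t : Z] :|: [set (CC L r (t + 1), VV L r t) | t : Z].
Proof.
move=> HL; rewrite /walk_edges; congr (_ :|: _); apply: eq_imset => t.
  by rewrite wcheckE wvarE.
by rewrite wcheckS // wvarE.
Qed.

Lemma allowC L r u1 u2 : allowable s hl L -> CC L r u1 = CC L r u2 -> u1 = u2.
Proof.
move=> /forallP /(_ r) /forallP /(_ u1) /forallP /(_ u2) /andP [H _] E.
by apply/eqP; move: H; rewrite !wcheckE E eqxx.
Qed.
Lemma allowV L r u1 u2 : allowable s hl L -> VV L r u1 = VV L r u2 -> u1 = u2.
Proof.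
move=> /forallP /(_ r) /forallP /(_ u1) /forallP /(_ u2) /andP [_ H] E.
by apply/eqP; move: H; rewrite !wvarE E eqxx.
Qed.

Lemma one_neq0 : (1 : Z) != 0.
Proof. by []. Qed.

Lemma chainP L : is_chain B s hl L -> forall u : Z,
  [/\ cI L u \in B (cJ L u), cI L (u + 1) \in B (cJ L u), cI L u != cI L (u + 1) & cJ L u != cJ L (u + 1)].
Proof.
case/andP=> /forallP H _ u; have := H u.
by rewrite !ciE !cjE znS zn_ord => /and4P [].
Qed.

Definition WW (L : chain) r := [set (CC L r t, VV L r t) | t : Z] :|: [set (CC L r (t + 1), VV L r t) | t : Z].

Lemma inWW L r c v : (c, v) \in WW L r ->
  exists t, (c = CC L r t /\ v = VV L r t) \/ (c = CC L r (t + 1) /\ v = VV L r t).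
Proof.
rewrite inE => /orP [] /imsetP [t _ [-> ->]]; exists t; by [left|right].
Qed.

Lemma memWW1 L r t : (CC L r t, VV L r t) \in WW L r.
Proof. by rewrite inE; apply/orP; left; apply/imsetP; exists t. Qed.
Lemma memWW2 L r t : (CC L r (t + 1), VV L r t) \in WW L r.
Proof. by rewrite inE; apply/orP; right; apply/imsetP; exists t. Qed.

Lemma N1 L r c a : allowable s hl L -> (c, VV L r a) \in WW L r -> c = CC L r a \/ c = CC L r (a + 1).
Proof.
move=> HA /inWW [t [[-> /(allowV HA) ->]|[-> /(allowV HA) ->]]]; by [left|right].
Qed.

Lemma N2 L r v a : allowable s hl L -> (CC L r a, v) \in WW L r -> v = VV L r a \/ v = VV L r (a - 1).
Proof.
move=> HA /inWW [t [[/(allowC HA) -> ->]|[/(allowC HA) -> ->]]]; first by left.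
by right; rewrite addrK.
Qed.

Lemma zn_ind (P : Z -> Prop) : P 0 -> (forall u, P u -> P (u + 1)) -> forall u, P u.
Proof.
move=> P0 PS; suff H : forall j, P (zn j) by move=> u; rewrite -(zn_ord u); apply: H.
elim=> [|j IH]; first by have -> : zn 0 = 0 by apply: val_inj.
by move: (PS _ IH); rewrite -znS.
Qed.

Lemma neqS (u : Z) : u + 1 != u.
Proof. by rewrite -subr_eq0 addrAC subrr add0r. Qed.

Lemma Match L L' r r' : allowable s hl L -> allowable s hl L' ->
  WW L r = WW L' r' -> exists t,
  (forall u, CC L' r' u = CC L r (t + u) /\ VV L' r' u = VV L r (t + u)) \/
  (forall u, CC L' r' u = CC L r (t + 1 - u) /\ VV L' r' u = VV L r (t - u)).
Proof.
move=> HA HA' EW.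
have := memWW1 L' r' 0; rewrite -EW => /inWW [t [[E1 E2]|[E1 E2]]]; exists t.
- left; apply: zn_ind; first by rewrite !addr0.
  move=> u [Cu Vu].
  have := memWW2 L' r' u; rewrite -EW Vu => /N1 -/(_ HA) [].
    by rewrite -Cu => /(allowC HA') /eqP; rewrite (negbTE (neqS u)).
  move=> Cu1; split; first by rewrite Cu1 addrA.
  have := memWW1 L' r' (u + 1); rewrite -EW Cu1 => /N2 -/(_ HA) [E|E]; first by rewrite E addrA.
  by move: E; rewrite addrK -Vu => /(allowV HA') /eqP; rewrite (negbTE (neqS u)).
- right; apply: zn_ind; first by rewrite !subr0.
  move=> u [Cu Vu].
  have := memWW2 L' r' u; rewrite -EW Vu => /N1 -/(_ HA) [] Cu1.
    split; first by rewrite Cu1; congr CC; ring.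
    have := memWW1 L' r' (u + 1); rewrite -EW Cu1 => /N2 -/(_ HA) [].
      by rewrite -Vu => /(allowV HA') /eqP; rewrite (negbTE (neqS u)).
    by move=> ->; congr VV; ring.
  move: Cu1; have -> : t - u + 1 = t + 1 - u by ring.
  by rewrite -Cu => /(allowC HA') /eqP; rewrite (negbTE (neqS u)).
Qed.

Definition allowable_chain' L := allowable_chain B s hl L.

Lemma unit_nat p (x : nat) : prime p -> (0 < x < p)%N -> (x%:R : 'Z_p) \is a GRing.unit.
Proof.
move=> pp /andP [x0 xp]; rewrite unitZpE ?prime_gt1 // prime_coprime //.
by rewrite gtnNdvd.
Qed.

Lemma noperiod L (e : Z) : prime m -> (n.+2 <= m)%N -> allowable_chain B s hl L ->
  e != 0 -> (forall u, L (u + e) = L u) -> False.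
Proof.
move=> pm lm /andP [HL HA] e0 Hp.
have cIp u : cI L (u + e) = cI L u by rewrite /cI Hp.
have cJp u : cJ L (u + e) = cJ L u by rewrite /cJ Hp.
pose D := WX L 0 e - WX L 0 0.
have HD : forall u, WX L 0 (u + e) - WX L 0 u = D.
  apply: zn_ind; first by rewrite add0r.
  move=> u IH; rewrite addrAC !WXS // -IH.
  have -> : delta L (u + e) = delta L u.
    by rewrite /delta addrAC cIp cJp cIp.
  by rewrite opprD addrACA subrr addr0.
have Hj : forall j, WX L 0 (e *+ j) = D *+ j.
  elim=> [|j IH]; first by rewrite !mulr0n.
  rewrite !mulrSr; move: (HD (e *+ j)); rewrite IH => /eqP; rewrite subr_eq => /eqP ->; by rewrite addrC.
have el : e *+ n.+2 = 0 by rewrite -mulr_natr -znE znl mulr0.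
have Dl : D *+ n.+2 = 0 by rewrite -Hj el.
have Hper : forall j u, L (u + e *+ j) = L u.
  elim=> [|j IH] u; first by rewrite mulr0n addr0.
  by rewrite mulrSr addrA Hp IH.
case: (ltnP n.+2 m) => [lt|ge].
- have D0 : D = 0.
    move: Dl; rewrite -mulr_natr => /(congr1 (fun x => x * (n.+2)%:R^-1)); rewrite mulrK ?mul0r //.
    by apply: unit_nat => //; rewrite lt.
  have : CC L 0 e = CC L 0 0.
    by rewrite /CC -[e in cI L e]add0r cIp; congr pair; apply/eqP; rewrite -subr_eq0 -/D D0.
  by move/(allowC HA)/eqP; rewrite (negbTE e0).
- have lm' : m = n.+2 by apply/eqP; rewrite eqn_leq lm ge.
  have eu : e \is a GRing.unit.
    have := @unit_nat n.+2 e; rewrite natr_Zp; apply; first by rewrite -lm'.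
    by rewrite ltn_ord andbT lt0n; apply: contra e0 => /eqP H; apply/eqP/val_inj.
  have : L (0 + e *+ (nat_of_ord (e^-1))) = L 0 by apply: Hper.
  rewrite -mulr_natr natr_Zp mulrV // add0r => E.
  have [_ _ /negP H _] := chainP HL 0; apply: H.
  by rewrite add0r /cI E.
Qed.

Lemma L_pair (L : chain) u : L u = (cI L u, cJ L u).
Proof. by rewrite /cI /cJ; case: (L u). Qed.

Lemma zn_neq0 j : (0 < j < n.+2)%N -> zn j != 0.
Proof.
move=> /andP [j0 jl]; apply/eqP => /(congr1 val) /=; rewrite modn_small //.
by move=> E; move: j0; rewrite E.
Qed.

Lemma periodic_false L j : prime m -> (n.+2 <= m)%N -> allowable_chain B s hl L ->
  (j < n.+1)%N -> periodicb hl L j.+1 = false.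
Proof.
move=> pm lm HAC jl; apply/negP => /forallP H.
apply: (noperiod (e := zn j.+1)) pm lm HAC _ _; first by apply: zn_neq0.
move=> u; have := H u; rewrite !cidxE zn_ord znD zn_ord; by move/eqP.
Qed.

Lemma chain_n1 L : prime m -> (n.+2 <= m)%N -> allowable_chain B s hl L -> chain_n hl L = 1%N.
Proof.
move=> pm lm HAC; rewrite /chain_n /chain_e.
have -> : iota 0 n.+2 = iota 0 n.+1 ++ [:: n.+1] by rewrite -addn1 iotaD.
rewrite find_cat size_iota.
have -> : has (fun e => periodicb hl L e.+1) (iota 0 n.+1) = false.
  apply/hasPn => j; rewrite mem_iota add0n => /andP [_ jl].
  by rewrite periodic_false.
have P2 : periodicb hl L n.+2.
  apply/forallP => t; by rewrite !cidxE znD znl addr0.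
by rewrite /= P2 addn0 divnn.
Qed.

Lemma walk_inj L r r' : prime m -> (n.+2 <= m)%N -> allowable_chain B s hl L ->
  WW L r = WW L r' -> r = r'.
Proof.
move=> pm lm HAC EW; have /andP [HL HA] := HAC.
have [t [H|H]] := Match HA HA EW.
- have [t0|t0] := eqVneq t 0.
    have [E _] := H 0; move: E; rewrite t0 addr0 => /(congr1 snd) E; symmetry; exact: E.
  exfalso; apply: (noperiod (e := t)) pm lm HAC t0 _ => u.
  have [/(congr1 fst) /= E1 /(congr1 fst) /= E3] := H u.
  by rewrite !L_pair addrC -E1 -E3.
- exfalso; have [HL1 _] := andP HAC.
  pose u := zn (t./2)%N.
  have Ht : t = zn (odd t) + (u + u).
    by rewrite -!znD addnn odd_double_half zn_ord.
  have [/(congr1 fst) /= E1 /(congr1 fst) /= E2] := H u; move: E1 E2.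
  have [_ _ /negP C1 /negP C2] := chainP HL1 u.
  rewrite Ht; case: (odd t) => /=.
  + move=> _ E2; apply: C2; apply/eqP; rewrite E2; congr cJ.
    have -> : zn 1 = 1 by apply: val_inj.
    ring.
  + move=> E1 _; apply: C1; apply/eqP; rewrite E1; congr cI.
    have -> : zn 0 = 0 by apply: val_inj.
    ring.
Qed.

Lemma ordSE (t : Z) : ordS t = t + 1.
Proof. symmetry; exact: (@add_Zp_1 n.+2 t). Qed.

Lemma walk_tanner L r : allowable_chain B s hl L -> tanner_cycle B s n.+2 (WW L r).
Proof.
move=> /andP [HL HA].
apply/existsP; exists [ffun t => CC L r t]; apply/existsP; exists [ffun t => VV L r t].
apply/and4P; split.
- by apply/injectiveP => x y; rewrite !ffunE; apply: allowC.
- by apply/injectiveP => x y; rewrite !ffunE; apply: allowV.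
- apply/forallP => t; rewrite !ffunE ordSE /tadj /=.
  have [H1 H2 _ _] := chainP HL t.
  rewrite H1 H2 /= subrK eqxx /= WXS // /delta; apply/eqP; ring.
- apply/eqP; rewrite /WW; congr (_ :|: _); apply: eq_imset => t; by rewrite !ffunE ?ordSE.
Qed.

Lemma allowI L :
  (forall r t1 t2, CC L r t1 = CC L r t2 -> t1 = t2) ->
  (forall r t1 t2, VV L r t1 = VV L r t2 -> t1 = t2) -> allowable s hl L.
Proof.
move=> HC HV; apply/forallP => r; apply/forallP => t1; apply/forallP => t2.
apply/andP; split; apply/implyP; rewrite ?wcheckE ?wvarE => /eqP E; apply/eqP.
  exact: HC E.
exact: HV E.
Qed.

Lemma CC_shift L r r' t1 t2 : CC L r' t1 = CC L r' t2 -> CC L r t1 = CC L r t2.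
Proof.
rewrite /CC => -[E1 E2]; rewrite E1; congr pair.
by move: E2; rewrite (WX_lin L r') (WX_lin L r' t2) (WX_lin L r) (WX_lin L r t2) => /addrI ->.
Qed.

Lemma VV_shift L r r' t1 t2 : VV L r' t1 = VV L r' t2 -> VV L r t1 = VV L r t2.
Proof.
move=> E.
have E1 : cJ L t1 = cJ L t2 := congr1 fst E.
have E2 : WX L r' t1 - s (cI L t1) (cJ L t1) = WX L r' t2 - s (cI L t2) (cJ L t2) := congr1 snd E.
rewrite /VV E1; congr pair; move: E2; rewrite E1.
rewrite (WX_lin L r') (WX_lin L r' t2) (WX_lin L r) (WX_lin L r t2) -!addrA.
by move=> /addrI ->.
Qed.

Lemma tanner_walk E : tanner_cycle B s n.+2 E ->
  exists L r, allowable_chain B s hl L /\ E = WW L r.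
Proof.
case/existsP=> c /existsP [v /and4P [/injectiveP ic /injectiveP iv /forallP Ht /eqP ->]].
pose L : chain := [ffun t => ((c t).1, (v t).1)].
have cIE t : cI L t = (c t).1 by rewrite /cI ffunE.
have cJE t : cJ L t = (v t).1 by rewrite /cJ ffunE.
have HA t : [/\ (c t).1 \in B (v t).1, (c t).2 = (v t).2 + s (c t).1 (v t).1,
   (c (t + 1)).1 \in B (v t).1 & (c (t + 1)).2 = (v t).2 + s (c (t + 1)).1 (v t).1].
  by have := Ht t; rewrite /tadj ordSE => /andP [/andP [-> /eqP ->] /andP [-> /eqP ->]].
have HL : is_chain B s hl L.
  apply/andP; split.
    apply/forallP => t; rewrite !ciE !cjE znS zn_ord !cIE !cJE.
    have [h1 h2 h3 h4] := HA t.
    rewrite h1 h3 /=; apply/andP; split.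
      apply/eqP => e; have : c t = c (t + 1).
        by rewrite [c t]surjective_pairing [c (t+1)]surjective_pairing h2 h4 e.
      by move/ic/eqP; rewrite eq_sym (negbTE (neqS t)).
    apply/eqP => e; have : v t = v (t + 1).
      have [h1' h2' h3' h4'] := HA (t + 1).
      rewrite [v t]surjective_pairing [v (t+1)]surjective_pairing -e; congr pair.
      by apply: (addIr (s (c (t + 1)).1 (v t).1)); rewrite -h4 h2' e.
    by move/iv/eqP; rewrite eq_sym (negbTE (neqS t)).
  have -> : \sum_(t < n.+2) (s (ci hl L t) (cj hl L t) - s (ci hl L t.+1) (cj hl L t)) =
      \sum_(t : Z) (c t).2 - \sum_(t : Z) (c (t + 1)).2.
    rewrite -sumrB; apply: eq_bigr => t _.
    rewrite !ciE !cjE znS zn_ord !cIE !cJE.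
    have [_ h2 _ h4] := HA t; rewrite h2 h4; ring.
  by rewrite [X in X - _](reindex_inj (addIr 1)) /= subrr.
pose r := (c 0).2.
have HW : forall u, WX L r u = (c u).2.
  apply: zn_ind; first by rewrite WX0.
  move=> u IH; rewrite WXS // IH /delta !cIE !cJE.
  have [_ h2 _ h4] := HA u; rewrite h4 h2; ring.
have HC u : CC L r u = c u by rewrite /CC HW cIE -surjective_pairing.
have HV u : VV L r u = v u.
  rewrite /VV HW cIE cJE; have [_ h2 _ _] := HA u.
  by rewrite h2 addrK -surjective_pairing.
exists L, r; split.
  apply/andP; split => //; apply: allowI => r' t1 t2.
    by move/(CC_shift r); rewrite !HC => /ic.
  by move/(VV_shift r); rewrite !HV => /iv.
rewrite /WW; congr (_ :|: _); apply: eq_imset => t; by rewrite ?HC ?HV ?ordSE.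
Qed.

Definition sh (a : Z) (L : chain) : chain := [ffun t => L (t + a)].
Definition rv (L : chain) : chain := [ffun t => ((L (- t)).1, (L (- t - 1)).2)].

Lemma zn_sub (t : nat) : (t <= n.+2)%N -> zn (n.+2 - t) = - zn t.
Proof.
move=> tl; by rewrite !znE natrB // -(znE n.+2) znl sub0r.
Qed.

Lemma shiftcE a L : shiftc hl a L = sh (zn a) L.
Proof. by apply/ffunP => t; rewrite !ffunE cidxE znD zn_ord. Qed.

Lemma revcE L : revc hl L = rv L.
Proof.
apply/ffunP => t; rewrite !ffunE !cidxE zn_sub 1?zn_sub ?znS ?zn_ord ?opprD //.
all: exact: ltnW.
Qed.

Lemma isoP L1 L2 : reflect (exists a, L2 = sh a L1 \/ L2 = sh a (rv L1)) (chain_iso hl L1 L2).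
Proof.
apply: (iffP existsP) => [[a /orP [] /eqP]|[a [] ->]].
- by rewrite shiftcE zn_ord => ->; exists a; left.
- by rewrite shiftcE revcE zn_ord => ->; exists a; right.
- by exists a; apply/orP; left; rewrite shiftcE zn_ord.
- by exists a; apply/orP; right; rewrite shiftcE revcE zn_ord.
Qed.

Lemma shsh a b L : sh a (sh b L) = sh (a + b) L.
Proof. by apply/ffunP => t; rewrite !ffunE addrA. Qed.
Lemma sh0 L : sh 0 L = L.
Proof. by apply/ffunP => t; rewrite !ffunE addr0. Qed.
Lemma rvrv L : rv (rv L) = L.
Proof.
apply/ffunP => t; rewrite !ffunE /= opprK.
have -> : - (- t - 1) - 1 = t by ring.
by case: (L t).
Qed.
Lemma rvsh a L : rv (sh a L) = sh (- a) (rv L).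
Proof.
apply/ffunP => t; rewrite !ffunE; congr pair; congr (L _).1 || congr (L _).2; ring.
Qed.

Lemma iso_refl (L : chain) : chain_iso hl L L.
Proof. by apply/isoP; exists 0; left; rewrite sh0. Qed.

Lemma iso_sym (L1 L2 : chain) : chain_iso hl L1 L2 -> chain_iso hl L2 L1.
Proof.
move/isoP=> [a [] ->]; apply/isoP.
- by exists (- a); left; rewrite shsh addNr sh0.
- by exists a; right; rewrite rvsh rvrv shsh addrN sh0.
Qed.

Lemma iso_trans (L1 L2 L3 : chain) : chain_iso hl L1 L2 -> chain_iso hl L2 L3 -> chain_iso hl L1 L3.
Proof.
move=> /isoP [a Ha] /isoP [b [] ->]; apply/isoP; case: Ha => ->.
- by exists (b + a); left; rewrite shsh.
- by exists (b + a); right; rewrite shsh.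
- by exists (b - a); right; rewrite rvsh shsh.
- by exists (b - a); left; rewrite rvsh rvrv shsh.
Qed.

Definition good (L : chain) := forall r u, WX L r (u + 1) = WX L r u + delta L u.

Lemma good_chain L : is_chain B s hl L -> good L.
Proof. by move=> HL r u; apply: WXS. Qed.

Lemma znind_nat (L : chain) r (F : Z -> 'Z_m) :
  F 0 = r -> (forall j, F (zn j + 1) = F (zn j) + delta L (zn j)) ->
  forall u, WX L r u = F u.
Proof.
move=> F0 FS u; rewrite -[u]zn_ord /WX.
have -> : nat_of_ord (zn u) = u by rewrite zn_ord.
elim: (nat_of_ord u) => [|j IH].
  by have -> : zn 0 = 0 by apply: val_inj.
by rewrite wxS IH znS FS.
Qed.

Lemma WX_sh L a r u : good L -> WX (sh a L) r u = WX L (r - WX L 0 a) (u + a).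
Proof.
move=> HG; apply: (znind_nat (F := fun u => WX L (r - WX L 0 a) (u + a))).
  by rewrite add0r WX_lin subrK.
move=> j; rewrite addrAC HG; congr (_ + _).
by rewrite /delta /cI /cJ !ffunE addrAC.
Qed.

Lemma WX_rv L r u : good L -> WX (rv L) r u = WX L r (- u).
Proof.
move=> HG; apply: (znind_nat (F := fun u => WX L r (- u))).
  by rewrite oppr0.
move=> j; set w := - zn j - 1.
have -> : - zn j = w + 1 by rewrite /w subrK.
have -> : - (zn j + 1) = w by rewrite /w opprD.
rewrite HG /delta /cI /cJ !ffunE /=.
have -> : - (zn j + 1) = w by rewrite /w opprD.
have -> : - zn j = w + 1 by rewrite /w subrK.
have -> : w + 1 - 1 = w by rewrite addrK.
rewrite -/(cJ L w); ring.
Qed.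

Lemma imset_bij (T : finType) (f : Z -> T) (g : Z -> Z) : bijective g ->
  [set f (g t) | t : Z] = [set f t | t : Z].
Proof.
case=> h gh hg; apply/setP => x; apply/imsetP/imsetP => [[t _ ->]|[t _ ->]].
  by exists (g t).
by exists (h t); rewrite ?hg.
Qed.

Lemma WW_sh L a r : good L -> WW (sh a L) r = WW L (r - WX L 0 a).
Proof.
move=> HG; rewrite /WW.
have HC u : CC (sh a L) r u = CC L (r - WX L 0 a) (u + a).
  by rewrite /CC WX_sh // /cI ffunE.
have HV u : VV (sh a L) r u = VV L (r - WX L 0 a) (u + a).
  by rewrite /VV WX_sh // /cI /cJ !ffunE.
have bij : bijective (fun t : Z => t + a).
  by exists (fun t => t - a) => t; rewrite ?addrK ?subrK.
congr (_ :|: _).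
  rewrite -(imset_bij (fun t => (CC L (r - WX L 0 a) t, VV L (r - WX L 0 a) t)) bij).
  by apply: eq_imset => t; rewrite HC HV.
rewrite -(imset_bij (fun t => (CC L (r - WX L 0 a) (t + 1), VV L (r - WX L 0 a) t)) bij).
by apply: eq_imset => t; rewrite HC HV addrAC.
Qed.

Lemma good_rv L : good L -> good (rv L).
Proof.
move=> HG r u; rewrite !WX_rv //.
set w := - u - 1.
have -> : - (u + 1) = w by rewrite /w opprD.
have -> : - u = w + 1 by rewrite /w subrK.
rewrite HG /delta /cI /cJ !ffunE /=.
have -> : - (u + 1) = w by rewrite /w opprD.
have -> : - u = w + 1 by rewrite /w subrK.
have -> : w + 1 - 1 = w by rewrite addrK.
rewrite -/(cJ L w); ring.
Qed.

Lemma WW_rv L r : good L -> WW (rv L) r = WW L r.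
Proof.
move=> HG; rewrite /WW.
set w := fun t : Z => - t - 1.
have HC u : CC (rv L) r u = CC L r (w u + 1).
  by rewrite /CC WX_rv // /cI ffunE /w subrK.
have HV u : VV (rv L) r u = VV L r (w u).
  rewrite /VV WX_rv // /cI /cJ !ffunE /= /w; congr pair.
  have := HG r (- u - 1); rewrite subrK => ->.
  rewrite /delta /cI /cJ subrK; ring.
have bij : bijective w.
  by exists w => t; rewrite /w; ring.
rewrite [LHS]finset.setUC; congr (_ :|: _).
  rewrite -(imset_bij (fun t => (CC L r t, VV L r t)) bij).
  apply: eq_imset => t; rewrite HC HV /w; congr (CC L r _, _); ring.
rewrite -(imset_bij (fun t => (CC L r (t + 1), VV L r t)) bij).
by apply: eq_imset => t; rewrite HC HV.
Qed.

Lemma iso_WW L1 L2 r : is_chain B s hl L1 -> chain_iso hl L1 L2 -> exists r', WW L2 r = WW L1 r'.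
Proof.
move=> HL /isoP [a [] ->]; have G := good_chain HL; have G' := good_rv G.
  by eexists; rewrite WW_sh.
by eexists; rewrite WW_sh // WW_rv.
Qed.

Lemma WW_iso L1 L2 r1 r2 : allowable_chain B s hl L1 -> allowable_chain B s hl L2 ->
  WW L1 r1 = WW L2 r2 -> chain_iso hl L1 L2.
Proof.
move=> /andP [_ HA1] /andP [_ HA2] EW; have [t [H|H]] := Match HA1 HA2 EW; apply/isoP.
- exists t; left; apply/ffunP => u; rewrite ffunE (L_pair L2 u) (L_pair L1 (u + t)).
  have [/(congr1 fst) /= E1 /(congr1 fst) /= E2] := H u.
  by rewrite E1 E2 addrC.
- exists (- (t + 1)); right; apply/ffunP => u; rewrite !ffunE (L_pair L2 u).
  have [/(congr1 fst) /= E1 /(congr1 fst) /= E2] := H u.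
  rewrite E1 E2 /cI /cJ.
  have -> : - (u + - (t + 1)) = t + 1 - u by ring.
  have -> : t + 1 - u - 1 = t - u by ring.
  by [].
Qed.

Definition fW L := [set WW L r | r : 'Z_m].

Lemma fW_iso L1 L2 : is_chain B s hl L1 -> chain_iso hl L1 L2 -> fW L2 \subset fW L1.
Proof.
move=> HL Hi; apply/subsetP => E /imsetP [r _ ->].
by have [r' ->] := iso_WW r HL Hi; apply/imsetP; exists r'.
Qed.

Lemma fW_eq L1 L2 : allowable_chain B s hl L1 -> allowable_chain B s hl L2 ->
  (fW L1 = fW L2) <-> chain_iso hl L1 L2.
Proof.
move=> H1 H2; split.
  move=> E; have : WW L1 0 \in fW L2 by rewrite -E; apply/imsetP; exists 0.
  by case/imsetP => r _ /WW_iso; apply.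
move=> Hi; apply/eqP; rewrite eqEsubset.
have [/andP [HL1 _] /andP [HL2 _]] := (H1, H2).
by rewrite !fW_iso // iso_sym.
Qed.
End S.

Lemma leq_card_imset_imp (T U V : finType) (A : {set T}) (h1 : T -> U) (h2 : T -> V) :
  {in A &, forall x y, h1 x = h1 y -> h2 x = h2 y} -> (#|h2 @: A| <= #|h1 @: A|)%N.
Proof.
move=> Himp; case: (set_0Vmem A) => [->|[x0 Hx0]]; first by rewrite !imset0 !cards0.
pose phi u := h2 (odflt x0 [pick x in A | h1 x == u]).
apply: (leq_trans _ (leq_imset_card phi _)); apply: subset_leq_card.
apply/subsetP => v /imsetP [x Hx ->]; apply/imsetP; exists (h1 x); first exact: imset_f.
rewrite /phi; case: pickP => [y /andP [Hy /eqP Ey]|/(_ x)]; last by rewrite Hx eqxx.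
by rewrite /= (Himp y x).
Qed.

Lemma card_imset_eqv (T U V : finType) (A : {set T}) (h1 : T -> U) (h2 : T -> V) :
  {in A &, forall x y, h1 x = h1 y <-> h2 x = h2 y} -> #|h1 @: A| = #|h2 @: A|.
Proof.
move=> H; apply/eqP; rewrite eqn_leq !leq_card_imset_imp // => x y Hx Hy; by case: (H x y Hx Hy).
Qed.

Theorem mainTheorem9 (I : finType) (k m l : nat) (B : 'I_k -> {set I})
    (s : I -> 'I_k -> 'Z_m) (hl : (0 < l)%N) :
  prime m -> (2 <= l)%N -> (l <= m)%N ->
  (forall L : chain_t I k l, allowable_chain B s hl L ->
     chain_n hl L = 1%N /\ #|[set walk_edges s hl L r | r : 'Z_m]| = m)
  /\ #|[set E | tanner_cycle B s l E]| = (m * #|iso_classes B s hl|)%N.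
Proof.
move=> pm l2 lm.
case: l hl l2 lm => [|[|n]] hl //= _ lm.
have mgt1 : (1 < m)%N := prime_gt1 pm.
have cardZ : #|'Z_m| = m by rewrite card_ord Zp_cast.
have WE L r : allowable_chain B s hl L -> walk_edges s hl L r = WW s hl L r.
  by case/andP => HL _; rewrite (walk_edgesE r HL).
have fWc L : allowable_chain B s hl L -> #|fW s hl L| = m.
  move=> HAC; rewrite /fW card_imset ?cardZ //.
  by move=> r r' /(walk_inj pm lm HAC).
split.
  move=> L HAC; split; first exact: (chain_n1 pm lm HAC).
  have -> : [set walk_edges s hl L r | r : 'Z_m] = fW s hl L.
    by apply: eq_imset => r; rewrite WE.
  exact: fWc.
set A := allowable_chains B s hl.
set P := [set fW s hl L | L in A].
have HT : [set E | tanner_cycle B s n.+2 E] = cover P.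
  apply/setP => E; rewrite inE; apply/idP/bigcupP.
    move/(tanner_walk hl) => [L [r [HAC ->]]].
    exists (fW s hl L); first by apply: imset_f; rewrite inE.
    by apply/imsetP; exists r.
  by move=> [S /imsetP [L HL ->] /imsetP [r _ ->]]; apply: walk_tanner; rewrite inE in HL.
have Htriv : trivIset P.
  apply/trivIsetP => S1 S2 /imsetP [L1 H1 ->] /imsetP [L2 H2 ->] Hne.
  rewrite inE in H1; rewrite inE in H2.
  rewrite -setI_eq0; apply/eqP/setP => E; rewrite !inE.
  apply/negP => /andP [/imsetP [r1 _ E1] /imsetP [r2 _ E2]].
  move/eqP: Hne; apply; apply/(fW_eq H1 H2).
  by apply: (WW_iso H1 H2 (r1 := r1) (r2 := r2)); rewrite -E1 -E2.
rewrite HT; move/eqP: Htriv => <-.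
rewrite (eq_bigr (fun _ => m)) => [|S /imsetP [L HL ->]]; last by apply: fWc; rewrite inE in HL.
rewrite sum_nat_const mulnC; congr (_ * _)%N.
rewrite /iso_classes -/A; apply: card_imset_eqv => L1 L2 H1 H2.
have H1' : allowable_chain B s hl L1 by rewrite inE in H1.
have H2' : allowable_chain B s hl L2 by rewrite inE in H2.
rewrite (fW_eq H1' H2'); split; last first.
  move=> E; have : L2 \in [set L' in A | chain_iso hl L2 L'] by rewrite inE H2 iso_refl.
  by rewrite -E inE => /andP [].
move=> Hi; apply/setP => L; rewrite !inE; apply/andP/andP => -[Ha Hb]; split => //.
  exact: (iso_trans (iso_sym Hi) Hb).
exact: (iso_trans Hi Hb).
Qed.
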